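(* At any point during the execution of $\mathit{find\_ap\_set}$, let $t$ be an odd vertex whose even mate $t'$ is completely scanned, and let $s$ be an odd descendant of $t$ in the search structure. Then after any later blossom step that makes $s$ even, $s$ and $t$ belong to the same blossom.
   Context: Let $H$ be a finite undirected graph with a matching $M_H$ (free vertices, $\mathit{mate}$, alternating and augmenting paths as usual). The procedure $\mathit{find\_ap\_set}$ maintains a search structure $S$ (a forest of alternating trees whose nodes are odd vertices and blossoms = sets of even vertices with a base; $b(x)$ denotes the base of the blossom containing an even vertex $x$) and a set $\mathit{CP}$ of vertex-disjoint augmenting paths, both initially empty. For each free vertex $f$ in turn: if $f$ is not on a path of $\mathit{CP}$, add $f$ to $S$ as the root of a new tree (a trivial even blossom) and call $\mathit{find\_ap}(f)$. The recursive call $\mathit{find\_ap}(x)$, for $x$ even, scans each non-matching edge $xy$ in turn: if $y\notin S$ and $y$ is free, add $xy$ to $S$, add the path formed by the canonical path of $x$ followed by $y$ to $\mathit{CP}$, and terminate every currently executing call of $\mathit{find\_ap}$ (the outer loop then continues with the next free vertex); if $y\notin S$ and $y$ is matched (grow step), add $y$ as odd child of $b(x)$ and $y'=\mathit{mate}(y)$ as even child of $y$, and call $\mathit{find\_ap}(y')$; if $y\in S$ and $b(y)$ is even and a proper descendant of $b(x)$ in $S$ (blossom step), let $u_1,\dots,u_k$ be the odd vertices on the tree path from $b(x)$ to $b(y)$ with $u_1$ closest to $b(x)$, merge all blossoms and odd vertices on this path into one blossom with base $b(x)$ (so $u_1,\dots,u_k$ become even), and call $\mathit{find\_ap}(u_1),\dots,\mathit{find\_ap}(u_k)$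 in this order; otherwise do nothing. Vertices in $S$ remain in $S$ between trees. An even vertex $x$ is completely scanned if $\mathit{find\_ap}(x)$ has been called and was not terminated prematurely (so all non-matching edges at $x$ have been scanned). *)

(* Defs.v *)
From HB Require Import structures.
From mathcomp Require Import all_boot.
Set Implicit Arguments. Unset Strict Implicit. Unset Printing Implicit Defensive.

Inductive lbl := Out | Odd | Even.
Definition lbl_eqb (a b : lbl) :=
  match a, b with Out, Out | Odd, Odd | Even, Even => true | _, _ => false end.
Lemma lbl_eqP : Equality.axiom lbl_eqb.
Proof. by case; case; constructor. Qed.
HB.instance Definition _ := hasDecEq.Build lbl lbl_eqP.

(* Stack frames of the recursion: a pending call find_ap(v), or an
   executing call find_ap(v) having already scanned the edges v y, y in sc. *)
Inductive frame (T : finType) := FCall of T | FScan of T & {set T}.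
Arguments FCall {T}.

Record state (T : finType) := State {
  lab  : T -> lbl;           (* Out = not in S, Odd, Even *)
  base : T -> T;             (* b(x) for even x *)
  par  : T -> option T;      (* odd y: the even x it was grown from;
                                even child y' : its odd parent y; roots: None *)
  stk  : seq (frame T);      (* call stack, top first *)
  todo : {set T};            (* free vertices not yet handled by the outer loop *)
  cpf  : {set T};            (* free vertices lying on a path of CP *)
  dn   : {set T};            (* completely scanned vertices *)
  cur  : option T            (* root of the tree currently grown *)
}.

Definition upd (T : eqType) (U : Type) (f : T -> U) (x : T) (u : U) :=
  fun z => if z == x then u else f z.

Section Algo.
Variables (T : finType) (e : rel T) (mate : T -> option T).

Definition free (x : T) := mate x == None.
Definition nonmatch (x y : T) := e x y && (mate x != Some y).

(* Nodes of the search forest: (false, y) = odd vertex y,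
   (true, z) = blossom with base z. *)
Definition node_of (s : state T) (v : T) : bool * T :=
  if lab s v == Odd then (false, v) else (true, base s v).

Definition pnode (s : state T) (n : bool * T) : option (bool * T) :=
  omap (node_of s) (par s n.2).

(* prel s n m : m is the parent of n; connect (prel s) n a : a is an ancestor of n
   (reflexive), i.e. n is a descendant of a. *)
Definition prel (s : state T) : rel (bool * T) := fun n m => pnode s n == Some m.
Definition desc (s : state T) (n a : bool * T) := connect (prel s) n a.
Definition pdesc (s : state T) (n a : bool * T) := (n != a) && desc s n a.

Definition onpath (s : state T) (bx by_ : T) (n : bool * T) :=
  desc s (true, by_) n && desc s n (true, bx).

Definition merge_lab (s : state T) bx by_ : T -> lbl := fun w =>
  if (lab s w == Odd) && onpath s bx by_ (false, w) then Even else lab s w.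
Definition merge_base (s : state T) bx by_ : T -> T := fun w =>
  if (lab s w == Odd) && onpath s bx by_ (false, w) then bx
  else if (lab s w == Even) && onpath s bx by_ (true, base s w) then bx
  else base s w.

Definition init : state T :=
  State (fun _ => Out) id (fun _ => None) [::] [set f | free f] set0 set0 None.

Inductive kind := KOuterSkip | KOuterRoot | KCall | KReturn | KAugment
                | KGrow | KBlossom | KNothing.

Inductive step : kind -> state T -> state T -> Prop :=
| st_skip s f :
    stk s = [::] -> f \in todo s -> f \in cpf s ->
    step KOuterSkip s
      (State (lab s) (base s) (par s) [::] (todo s :\ f) (cpf s) (dn s) (cur s))
| st_root s f :
    stk s = [::] -> f \in todo s -> f \notin cpf s ->
    step KOuterRoot s
      (State (upd (lab s) f Even) (upd (base s) f f) (upd (par s) f None)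
             [:: FCall f] (todo s :\ f) (cpf s) (dn s) (Some f))
| st_call s v st :
    stk s = FCall v :: st ->
    step KCall s
      (State (lab s) (base s) (par s) (FScan v set0 :: st) (todo s) (cpf s) (dn s) (cur s))
| st_return s v sc st :
    stk s = FScan v sc :: st -> (forall y, nonmatch v y -> y \in sc) ->
    step KReturn s
      (State (lab s) (base s) (par s) st (todo s) (cpf s) (v |: dn s) (cur s))
| st_augment s v sc st y :
    stk s = FScan v sc :: st -> nonmatch v y -> y \notin sc ->
    lab s y = Out -> free y ->
    step KAugment s
      (State (upd (lab s) y Odd) (base s) (upd (par s) y (Some v)) [::] (todo s)
             (y |: oapp (fun r => r |: cpf s) (cpf s) (cur s)) (dn s) (cur s))
| st_grow s v sc st y y' :
    stk s = FScan v sc :: st -> nonmatch v y -> y \notin sc ->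
    lab s y = Out -> mate y = Some y' ->
    step KGrow s
      (State (upd (upd (lab s) y Odd) y' Even) (upd (base s) y' y')
             (upd (upd (par s) y (Some v)) y' (Some y))
             (FCall y' :: FScan v (y |: sc) :: st) (todo s) (cpf s) (dn s) (cur s))
| st_blossom s v sc st y (us : seq T) :
    stk s = FScan v sc :: st -> nonmatch v y -> y \notin sc ->
    lab s y = Even -> pdesc s (true, base s y) (true, base s v) ->
    (* us = u_1, ..., u_k : the odd vertices on the path, u_1 closest to b(x) *)
    perm_eq us [seq u <- enum T | (lab s u == Odd) &&
                                   onpath s (base s v) (base s y) (false, u)] ->
    sorted (fun u w => pdesc s (false, w) (false, u)) us ->
    step KBlossom s
      (State (merge_lab s (base s v) (base s y)) (merge_base s (base s v) (base s y))
             (par s) ([seq FCall u | u <- us] ++ FScan v (y |: sc) :: st)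
             (todo s) (cpf s) (dn s) (cur s))
| st_nothing s v sc st y :
    stk s = FScan v sc :: st -> nonmatch v y -> y \notin sc ->
    lab s y != Out ->
    ~~ ((lab s y == Even) && pdesc s (true, base s y) (true, base s v)) ->
    step KNothing s
      (State (lab s) (base s) (par s) (FScan v (y |: sc) :: st)
             (todo s) (cpf s) (dn s) (cur s)).

Inductive steps : state T -> state T -> Prop :=
| steps_refl s : steps s s
| steps_cons s1 k s2 s3 : step k s1 s2 -> steps s2 s3 -> steps s1 s3.

Definition reachable (s : state T) := steps init s.

Definition same_blossom (s : state T) (x y : T) :=
  (lab s x == Even) && (lab s y == Even) && (base s x == base s y).

End Algo.

(* Main.v *)
Require Import Defs.
From HB Require Import structures.
From mathcomp Require Import all_boot.
Set Implicit Arguments. Unset Strict Implicit. Unset Printing Implicit Defensive.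

Section Gen.
Variable N : finType.
Variable g : N -> option N.
Definition fr : rel N := fun n m => g n == Some m.

Lemma conn_step n m a : connect fr n a -> n != a -> g n = Some m -> connect fr m a.
Proof.
move=> /connectP [p Hp ->]; case: p Hp => [|k p] /= Hp; first by rewrite eqxx.
case/andP: Hp => /eqP Hk Hp _ Hg; rewrite Hg in Hk; case: Hk => ->.
by apply/connectP; exists p.
Qed.

Lemma conn_cmp n a b : connect fr n a -> connect fr n b ->
  connect fr a b \/ connect fr b a.
Proof.
move=> /connectP [p Hp ->]; elim: p n Hp => [|k p IH] n /=; first by left.
case/andP=> /eqP Hk Hp Hb.
have [nbE|nb] := eqVneq n b.
  by subst b; right; apply/connectP; exists (k :: p) => //=; rewrite /fr Hk eqxx.
exact: (IH k Hp (conn_step Hb nb Hk)).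
Qed.

Lemma conn_last n a : connect fr n a -> n != a -> exists c, connect fr n c /\ g c = Some a.
Proof.
move=> /connectP [p Hp ->]; elim: p n Hp => [|k p IH] n /=; first by rewrite eqxx.
case/andP=> /eqP Hk Hp Hne.
have [E|Hne2] := eqVneq k (last k p).
  by exists n; split; [exact: connect0 | rewrite Hk -E].
have [c [Hc Hgc]] := IH k Hp Hne2; exists c; split => //.
by apply: connect_trans Hc; apply: connect1; rewrite /fr Hk.
Qed.

Lemma conn_none n a : connect fr n a -> g n = None -> a = n.
Proof.
move=> /connectP [[|k p] /= Hp ->] // Hg.
by case/andP: Hp; rewrite /fr Hg.
Qed.

End Gen.

Lemma cat_split (X : eqType) (pre post A B : seq X) z :
  pre ++ z :: post = A ++ B -> z \in A \/ exists pre2, pre = A ++ pre2 /\ B = pre2 ++ z :: post.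
Proof.
elim: A pre => [|a A IH] pre /=; first by move=> <-; right; exists pre.
case: pre => [|p pre] /= [E1 E2]; first by left; rewrite E1 inE eqxx.
subst p; case: (IH pre E2) => [H|[pre2 [-> H]]]; first by left; rewrite inE H orbT.
by right; exists pre2.
Qed.

Section Map.
Variable N : finType.
Variables (r r' : rel N) (P : pred N) (f : N -> N).
Hypothesis Pcl : forall n m, P n -> r n m -> P m.

Lemma conn_P n m : P n -> connect r n m -> P m.
Proof.
move=> Pn /connectP [p Hp ->]; elim: p n Pn Hp => [|k p IH] n Pn //=.
case/andP=> Hk Hp; exact: (IH k (Pcl Pn Hk) Hp).
Qed.

Lemma conn_map : (forall n m, P n -> r n m -> f n = f m \/ r' (f n) (f m)) ->
  forall n m, P n -> connect r n m -> connect r' (f n) (f m).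
Proof.
move=> H n m Pn /connectP [p Hp ->]; elim: p n Pn Hp => [|k p IH] n Pn /=.
  by move=> _; exact: connect0.
case/andP=> Hk Hp; have := IH k (Pcl Pn Hk) Hp.
case: (H n k Pn Hk) => [->|Hr] //.
by move=> H2; apply: connect_trans (connect1 Hr) H2.
Qed.

Lemma conn_back : (forall n k, P n -> r' (f n) k -> exists n2, connect r n n2 /\ f n2 = k) ->
  forall n m', P n -> connect r' (f n) m' -> exists m, connect r n m /\ f m = m'.
Proof.
move=> H n m' Pn /connectP [p Hp ->]; elim: p n Pn Hp => [|k p IH] n Pn /=.
  by move=> _; exists n; split => //; exact: connect0.
case/andP=> Hk Hp; have [n2 [Hn2 Hf]] := H n k Pn Hk.
rewrite -Hf in Hp; have [m [Hm Hfm]] := IH n2 (conn_P Pn Hn2) Hp.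
exists m; split; first exact: connect_trans Hn2 Hm.
by rewrite Hfm Hf.
Qed.
End Map.


Section Main.
Variables (T : finType) (e : rel T) (mate : T -> option T).
Hypothesis mate_sym : forall x y, mate x = Some y -> mate y = Some x.
Hypothesis mate_irr : forall x, mate x != Some x.

Definition fv (f : frame T) : T := match f with FCall v => v | FScan v _ => v end.
Definition innode (s : state T) : pred (bool * T) := fun n => lab s n.2 != Out.
Definition closedn (s : state T) m :=
  forall w, lab s w = Even -> node_of s w = m -> w \in dn s.

Definition Qp (s : state T) (o t : T) := lab s o = Odd ->
  desc s (false, o) (node_of s t) /\
  forall m, desc s (false, o) m -> ~~ desc s (node_of s t) m -> closedn s m.

Record Inv (s : state T) : Prop := {
 i_base : forall x, lab s x = Even -> lab s (base s x) = Even /\ base s (base s x) = base s x;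
 i_par : forall x p, par s x = Some p -> lab s x != Out /\ lab s p != Out;
 i_mateOut : forall x x', mate x = Some x' -> (lab s x == Out) = (lab s x' == Out);
 i_oddmate : forall x x', lab s x = Odd -> mate x = Some x' -> lab s x' = Even /\ par s x' = Some x;
 i_evbase : forall x p, lab s x = Even -> par s x = Some p -> lab s p = Odd -> base s x = x;
 i_parodd : forall z p, par s z = Some p -> lab s p = Odd -> mate p = Some z;
 i_oddpar : forall x p, lab s x = Odd -> par s x = Some p -> lab s p = Even;
 i_uniq : uniq (map fv (stk s));
 i_stk : forall z, z \in map fv (stk s) -> lab s z = Even /\ z \notin dn s;
 i_dn : forall x, x \in dn s -> lab s x = Even;
 i_todo : forall f, f \in todo s -> free mate f /\ (f \notin cpf s -> lab s f = Out);
 i_G0 : forall x, lab s x = Even -> base s x = x -> x \in dn s ->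
          forall w, lab s w = Even -> desc s (node_of s w) (true, x) -> w \in dn s;
 i_H : forall pre z post, map fv (stk s) = pre ++ z :: post -> base s z = z ->
          forall w, lab s w = Even -> desc s (node_of s w) (true, z) ->
          w = z \/ w \in dn s \/ w \in pre
}.

Section OneState.
Variable s : state T.
Hypothesis I : Inv s.

Lemma innode_node x : lab s x != Out -> innode s (node_of s x).
Proof.
rewrite /innode /node_of => Hout; case: (lab s x =P Odd) => [_|Hx] //=.
have HE : lab s x = Even by move: Hx Hout; case: (lab s x).
by rewrite (i_base I HE).1.
Qed.

Lemma prel_P n m : innode s n -> prel s n m -> innode s m.
Proof.
rewrite /prel /pnode /innode; case E: (par s n.2) => [p|] //= Hn /eqP [<-].
by apply: innode_node; case: (i_par I E).
Qed.

Lemma desc_P n m : innode s n -> desc s n m -> innode s m.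
Proof. exact: (conn_P (@prel_P)). Qed.

Definition wellnode (n : bool * T) :=
  if n.1 then (lab s n.2 == Even) && (base s n.2 == n.2) else lab s n.2 == Odd.

Lemma wellnode_node x : lab s x != Out -> wellnode (node_of s x).
Proof.
rewrite /wellnode /node_of => Hout; case: (lab s x =P Odd) => [->|Hx] //=.
have HE : lab s x = Even by move: Hx Hout; case: (lab s x).
by case: (i_base I HE) => -> ->; rewrite !eqxx.
Qed.

Lemma prel_W n m : wellnode n -> prel s n m -> wellnode m.
Proof.
move=> Hw; rewrite /prel /pnode; case E: (par s n.2) => [p|] //= /eqP [<-].
by apply: wellnode_node; case: (i_par I E).
Qed.

Lemma desc_W n m : wellnode n -> desc s n m -> wellnode m.
Proof. exact: (conn_P prel_W). Qed.

Lemma v_stk z : z \in map fv (stk s) -> lab s z = Even. 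
Proof. by case/(i_stk I). Qed.

End OneState.

Definition Simple (s s' : state T) :=
  (forall x, lab s x != Out -> lab s' x = lab s x /\ base s' x = base s x /\ par s' x = par s x).

Section SimpleStep.
Variables s s' : state T.
Hypothesis I : Inv s.
Hypothesis S : Simple s s'.

Lemma simple_node x : lab s x != Out -> node_of s' x = node_of s x.
Proof. by move=> Hx; case: (S Hx) => [H1 [H2 _]]; rewrite /node_of H1 H2. Qed.

Lemma simple_pnode n : innode s n -> pnode s' n = pnode s n.
Proof.
move=> Hn; rewrite /pnode (S Hn).2.2; case E: (par s n.2) => [p|] //=.
by rewrite simple_node //; case: (i_par I E).
Qed.

Lemma simple_desc n m : innode s n -> desc s' n m = desc s n m.
Proof.
move=> Hn; apply/idP/idP => H.
- have Hb : forall n k, innode s n -> prel s' (id n) k ->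
     exists n2, connect (prel s) n n2 /\ id n2 = k.
    move=> n1 k Pn Hk; exists k; split => //; apply: connect1.
    by rewrite /prel -(simple_pnode Pn).
  by have [m2 [Hm2 <-]] := conn_back (@prel_P s I) Hb Hn H.
- apply: (conn_map (f := id) (@prel_P s I)) H => // n1 m1 Pn Hr; right.
  by rewrite /prel /= (simple_pnode Pn).
Qed.

Lemma simple_Q o t : (forall w, lab s w = Out -> lab s' w = Even -> base s' w = w) ->
  dn s \subset dn s' -> lab s o != Out -> lab s t != Out -> Qp s o t -> Qp s' o t.
Proof.
move=> Hnew Hdn Ho Ht HQ Ho'.
have Hos : lab s o = Odd by rewrite -Ho' (S Ho).1.
have [H1 H2] := HQ Hos.
have No : node_of s (false, o).2 = (false, o) by rewrite /node_of /= Hos.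
have Po : innode s (false, o) by rewrite /innode /= Hos.
have Pt := innode_node I Ht.
split; first by rewrite (simple_node Ht) simple_desc.
move=> m Hm Hnm; rewrite simple_desc // in Hm.
rewrite (simple_node Ht) simple_desc // in Hnm.
have Hc := H2 m Hm Hnm; move=> w Hw Hwm.
case Hws: (lab s w == Out).
  have E := Hnew w (eqP Hws) Hw; rewrite /node_of Hw E /= in Hwm.
  have := desc_P I Po Hm; by rewrite -Hwm /innode /= (eqP Hws).
have Hws' : lab s w != Out by rewrite Hws.
have [E1 _] := S Hws'; rewrite (simple_node Hws') in Hwm.
apply: (subsetP Hdn); apply: Hc Hwm; by rewrite -E1.
Qed.

End SimpleStep.
End Main.
Arguments fv {T}.
Arguments innode {T}.
Arguments closedn {T}.
Arguments Qp {T}.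


Section Blossom.
Variables (T : finType) (e : rel T) (mate : T -> option T).
Variables (s : state T) (v : T) (sc : {set T}) (st : seq (frame T)) (y : T) (us : seq T).
Hypothesis I : Inv mate s.
Hypothesis Hstk : stk s = FScan v sc :: st.
Hypothesis Hly : lab s y = Even.
Hypothesis Hpd : pdesc s (true, base s y) (true, base s v).
Let bx := base s v.
Let by_ := base s y.
Let s' := State (merge_lab s bx by_) (merge_base s bx by_)
             (par s) ([seq FCall u | u <- us] ++ FScan v (y |: sc) :: st)
             (todo s) (cpf s) (dn s) (cur s).
Definition fb (n : bool * T) := if onpath s bx by_ n then (true, bx) else n.

Lemma b_labv : lab s v = Even.
Proof. by apply: (v_stk I); rewrite Hstk inE eqxx. Qed.

Lemma b_bx : lab s bx = Even /\ base s bx = bx.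
Proof. exact: (i_base I b_labv). Qed.

Lemma b_onbx : onpath s bx by_ (true, bx).
Proof. by case/andP: Hpd => _ H; apply/andP; split => //; exact: connect0. Qed.

Lemma b_fbx : fb (true, bx) = (true, bx).
Proof. by rewrite /fb b_onbx. Qed.

Lemma b_up n m : onpath s bx by_ n -> n != (true, bx) -> prel s n m -> onpath s bx by_ m.
Proof.
case/andP=> H1 H2 Hn Hr; apply/andP; split.
  exact: connect_trans H1 (connect1 Hr).
exact: (conn_step (g := pnode s) H2 Hn (eqP Hr)).
Qed.

Lemma b_lab x : lab s' x = merge_lab s bx by_ x.
Proof. by []. Qed.

Lemma b_out x : (lab s' x == Out) = (lab s x == Out).
Proof. by rewrite b_lab /merge_lab; case: ifP => //; case/andP => /eqP ->. Qed.

Lemma b_node x : lab s x != Out -> node_of s' x = fb (node_of s x).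
Proof.
move=> Hx; rewrite /node_of /= /merge_lab /merge_base /fb.
case: (lab s x =P Odd) => [Ho|Hno] /=.
  by rewrite Ho /=; case: (onpath s bx by_ (false, x)).
have HE : lab s x = Even by move: Hno Hx; case: (lab s x).
by rewrite HE /=; case: (onpath s bx by_ (true, base s x)).
Qed.

Lemma b_pnode n : innode s n -> pnode s' n = omap fb (pnode s n).
Proof.
move=> Hn; rewrite /pnode /=; case E: (par s n.2) => [p|] //=.
by rewrite b_node //; case: (i_par I E).
Qed.

Lemma b_desc n m : innode s n -> desc s n m -> desc s' (fb n) (fb m).
Proof.
apply: (conn_map (@prel_P _ _ s I)) => n1 m1 Pn Hr.
case Hon: (onpath s bx by_ n1).
  have [E|Hne] := eqVneq n1 (true, bx).
    subst n1; by right; rewrite /prel b_fbx b_pnode // (eqP Hr).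
  left; rewrite /fb Hon (b_up Hon Hne Hr); done.
by right; rewrite /prel {1}/fb Hon b_pnode // (eqP Hr).
Qed.

Lemma b_back n m' : innode s n -> desc s' (fb n) m' -> exists m, desc s n m /\ fb m = m'.
Proof.
apply: (conn_back (@prel_P _ _ s I)) => n1 k Pn.
case Hon: (onpath s bx by_ n1).
  rewrite {1}/fb Hon /prel b_pnode; last first.
    by rewrite /innode /=; case: b_bx => ->.
  case E: (pnode s (true, bx)) => [m|] //= /eqP [<-].
  exists m; split => //; case/andP: Hon => _ H.
  by apply: connect_trans H (connect1 _); rewrite /prel E.
rewrite /prel {1}/fb Hon b_pnode //.
case E: (pnode s n1) => [m|] //= /eqP [<-].
by exists m; split => //; apply: connect1; rewrite /prel E.
Qed.

Hypothesis Hperm : perm_eq us [seq u <- enum T | (lab s u == Odd) &&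
                                   onpath s bx by_ (false, u)].

Lemma b_memus u : (u \in us) = (lab s u == Odd) && onpath s bx by_ (false, u).
Proof. by rewrite (perm_mem Hperm) mem_filter mem_enum andbT. Qed.

Lemma b_uniqus : uniq us.
Proof. by rewrite (perm_uniq Hperm) filter_uniq // enum_uniq. Qed.

Lemma b_labE x : lab s' x = if (lab s x == Odd) && onpath s bx by_ (false, x) then Even else lab s x.
Proof. by []. Qed.

Lemma b_evenS x : lab s x = Even -> lab s' x = Even.
Proof. by move=> H; rewrite b_labE H. Qed.

Lemma b_oddS x : lab s' x = Odd -> lab s x = Odd /\ ~~ onpath s bx by_ (false, x).
Proof. by rewrite b_labE; case: (lab s x) => //=; case: (onpath s bx by_ (false, x)). Qed.

Lemma b_evenE x : lab s' x = Even -> lab s x = Even \/ (x \in us).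
Proof.
rewrite b_labE b_memus; case: (lab s x) => //=; case: (onpath s bx by_ (false, x)) => //=; by [right|left].
Qed.

Lemma b_nodeE x : lab s' x = Even -> node_of s' x = (true, base s' x).
Proof. by move=> H; rewrite /node_of H. Qed.

Lemma b_nodeE0 x : lab s x = Even -> node_of s x = (true, base s x).
Proof. by move=> H; rewrite /node_of H. Qed.

Lemma b_key x : lab s x = Even -> base s' x = x -> base s x = x /\ fb (true, x) = (true, x).
Proof.
move=> Hx Hb; have Hx' := b_evenS Hx.
have := b_node (x := x); rewrite Hx => /(_ isT); rewrite b_nodeE // Hb b_nodeE0 //.
rewrite /fb; case: ifP => Hon [E].
  by have [_ H2] := b_bx; rewrite E H2 b_onbx; split.
by rewrite -E in Hon; rewrite -E Hon.
Qed.

Lemma b_backfix n x : innode s n -> desc s' (fb n) (true, x) -> fb (true, x) = (true, x) ->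
  desc s n (true, x).
Proof.
move=> Pn Hd Hf; have [m [Hm Hfm]] := b_back Pn Hd.
move: Hfm; rewrite /fb; case: ifP => Hon; last by move=> <-.
move=> E; rewrite -E; case/andP: Hon => _ H; exact: connect_trans Hm H.
Qed.

Lemma b_inv : Inv mate s'.
Proof.
have Hv := b_labv; have [Hbx1 Hbx2] := b_bx.
case: (I) => Ibase Ipar ImO Iom Ieb Ipo Iop Iu Is Idn Itd IG IH.
have Hs' : map fv (stk s') = us ++ map fv (stk s).
  rewrite /s' /= map_cat Hstk; congr (_ ++ _); by elim: (us) => //= a l ->.
have NnO : forall x, lab s' x = Even -> lab s x != Out.
  by move=> x; rewrite -(b_out x) => ->.
constructor.
- move=> x Hx; have := b_node (NnO x Hx); rewrite b_nodeE // /fb.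
  case: ifP => Hon [E].
    change (base s' x = bx) in E.
    rewrite E; split; first exact: b_evenS.
    have := b_node (x := bx); rewrite Hbx1 => /(_ isT).
    by rewrite b_nodeE ?b_evenS // b_nodeE0 // Hbx2 b_fbx => -[].
  have Hxe : lab s x = Even.
    by move: E (NnO x Hx); rewrite /node_of; case: (lab s x).
  rewrite b_nodeE0 // in E Hon; case: E => E.
  change (base s' x = base s x) in E.
  have [H1 H2] := Ibase x Hxe; rewrite E; split; first exact: b_evenS.
  have := b_node (x := base s x); rewrite H1 => /(_ isT).
  by rewrite b_nodeE ?b_evenS // b_nodeE0 // H2 /fb Hon => -[].
- move=> x p Hp; rewrite !b_out; exact: (Ipar x p Hp).
- move=> x x' Hm; rewrite !b_out; exact: ImO.
- move=> x x' /b_oddS [Hx _] Hm; have [H1 H2] := Iom x x' Hx Hm.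
  by split; [exact: b_evenS|].
- move=> x p Hx Hp /b_oddS [Hpo Hpn].
  case: (b_evenE Hx) => Hxs; last first.
    by move: Hxs; rewrite b_memus => /andP [/eqP Hxo _]; rewrite (Iop x p Hxo Hp) in Hpo.
  have Hb := Ieb x p Hxs Hp Hpo.
  have := b_node (x := x); rewrite Hxs => /(_ isT); rewrite b_nodeE // b_nodeE0 // Hb /fb.
  case: ifP => Hon [E] //.
  have [Ex|ne] := eqVneq (true, x) (true, bx).
    by case: Ex => Ex; rewrite {2}Ex -{1}E.
  have Hr : prel s (true, x) (false, p) by rewrite /prel /pnode /= Hp /node_of /= Hpo.
  by rewrite (b_up Hon ne Hr) in Hpn.
- by move=> z p Hp /b_oddS [Hp' _]; apply: Ipo.
- move=> x p /b_oddS [Hx _] Hp; apply: b_evenS; exact: Iop Hx Hp.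
- rewrite Hs' cat_uniq b_uniqus Iu andbT /=.
  apply/hasPn => z Hz; rewrite b_memus; apply/negP => /andP [/eqP Hzo _].
  by case: (Is z); rewrite // Hzo.
- move=> z; rewrite Hs' mem_cat => /orP [Hz|Hz].
    move: Hz; rewrite b_memus => /andP [/eqP Hzo Hon]; split.
      by rewrite b_labE Hzo Hon.
    by apply/negP => /Idn; rewrite Hzo.
  by case/Is: Hz => H1 H2; split => //; apply: b_evenS.
- by move=> x /Idn /b_evenS.
- move=> f Hf; have [H1 H2] := Itd f Hf; split => // Hc.
  by rewrite b_labE (H2 Hc).
- move=> x Hx' Hb Hd w Hw Hdw.
  have Hx := Idn x Hd; have [Hbs Hfx] := b_key Hx Hb.
  case: (b_evenE Hw) => Hws.
    apply: (IG x Hx Hbs Hd w Hws); apply: b_backfix Hfx.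
      by apply: (innode_node I); rewrite Hws.
    by rewrite -b_node // Hws.
  move: Hws; rewrite b_memus => /andP [/eqP Hwo Hon].
  have : node_of s' w = fb (true, bx) by rewrite b_node ?Hwo // /node_of Hwo /= /fb Hon b_onbx.
  move=> E; rewrite E in Hdw.
  have Hin : innode s (true, bx) by rewrite /innode /= Hbx1.
  have Hd2 := b_backfix Hin Hdw Hfx.
  have := IG x Hx Hbs Hd v Hv; rewrite b_nodeE0 // => /(_ Hd2).
  have : v \in map fv (stk s) by rewrite Hstk inE eqxx.
  by case/Is => _ /negbTE ->.
- move=> pre z post Hp Hb w Hw Hdw.
  rewrite Hs' in Hp; case: (cat_split (esym Hp)) => [Hz|[pre2 [Epre Hp2]]].
    move: Hz; rewrite b_memus => /andP [/eqP Hzo Hon].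
    have := b_node (x := z); rewrite Hzo => /(_ isT); rewrite b_nodeE ?b_labE ?Hzo ?Hon //.
    rewrite Hb /node_of Hzo /= /fb Hon => -[E]; by rewrite E Hbx1 in Hzo.
  have Hz : lab s z = Even by apply: (v_stk I); rewrite Hp2 mem_cat inE eqxx orbT.
  have [Hbs Hfz] := b_key Hz Hb.
  case: (b_evenE Hw) => Hws; last by right; right; rewrite Epre mem_cat Hws.
  have Hd : desc s (node_of s w) (true, z).
    apply: b_backfix Hfz; first by apply: (innode_node I); rewrite Hws.
    by rewrite -b_node // Hws.
  case: (IH pre2 z post Hp2 Hbs w Hws Hd) => [->|[H|H]]; first by left.
    by right; left.
  by right; right; rewrite Epre mem_cat H orbT.
Qed.

Lemma b_vnd : v \notin dn s.
Proof.
have Hv' : v \in map fv (stk s) by rewrite Hstk inE eqxx.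
by case: (i_stk I Hv').
Qed.

Lemma b_Q o t : lab s o != Out -> lab s t != Out -> Qp s o t -> Qp s' o t.
Proof.
move=> Ho Ht HQ Ho'.
have [Hos Hnon] := b_oddS Ho'.
have [H1 H2] := HQ Hos.
have Po : innode s (false, o) by rewrite /innode /= Hos.
have Pt := innode_node I Ht.
have Fo : fb (false, o) = (false, o) by rewrite /fb (negbTE Hnon).
have Nt : node_of s' t = fb (node_of s t) := b_node Ht.
split; first by rewrite Nt -Fo; exact: b_desc.
move=> m' Hm' Hnm'.
rewrite -Fo in Hm'; have [m [Hm Efm]] := b_back Po Hm'.
have Hnm : ~~ desc s (node_of s t) m.
  by apply/negP => Hd; move: Hnm'; rewrite Nt -Efm (b_desc Pt Hd).
have Hc := H2 m Hm Hnm.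
have Hon : ~~ onpath s bx by_ m.
  apply/negP => Hon.
  have Hbxm : desc s m (true, bx) by case/andP: Hon.
  have Hobx : desc s (false, o) (true, bx) := connect_trans Hm Hbxm.
  have Hnt : ~~ desc s (node_of s t) (true, bx).
    apply/negP => Hd; move: Hnm'; rewrite Nt -Efm.
    have := b_desc Pt Hd; rewrite b_fbx /fb Hon => ->; done.
  have := H2 _ Hobx Hnt v b_labv; rewrite b_nodeE0 ?b_labv // => /(_ erefl) Hvd.
  by move: b_vnd; rewrite Hvd.
move: Efm; rewrite /fb (negbTE Hon) => Efm; subst m'; move=> w Hw Hwm.
have Hws : lab s w != Out by rewrite -(b_out w) Hw.
rewrite b_node // in Hwm.
case Hon2: (onpath s bx by_ (node_of s w)).
  by rewrite /fb Hon2 in Hwm; rewrite -Hwm b_onbx in Hon.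
rewrite /fb Hon2 in Hwm.
case: (b_evenE Hw) => Hwe; first exact: Hc Hwe Hwm.
by move: Hwe; rewrite b_memus => /andP [/eqP Hwo Hon3]; rewrite /node_of Hwo /= Hon3 in Hon2.
Qed.

Lemma b_nodeT x b : lab s' x != Out -> node_of s' x = (true, b) -> lab s' x = Even /\ base s' x = b.
Proof.
rewrite /node_of; case: ifP => // Hno Hout [E]; split => //.
by move: Hno Hout; case: (lab s' x).
Qed.

Lemma b_final o t : lab s o = Odd -> lab s t != Out -> Qp s o t -> lab s' o = Even ->
  same_blossom s' o t.
Proof.
move=> Hos Ht HQ Ho'.
have Hon : onpath s bx by_ (false, o).
  by move: Ho'; rewrite b_labE Hos /=; case: (onpath _ _ _ _).
have [H1 H2] := HQ Hos.
have Hc : desc s (node_of s t) (true, bx).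
  apply/negPn/negP => Hn.
  have Hobx : desc s (false, o) (true, bx) by case/andP: Hon.
  have := H2 _ Hobx Hn v b_labv; rewrite b_nodeE0 ?b_labv // => /(_ erefl) Hvd.
  by move: b_vnd; rewrite Hvd.
have Hton : onpath s bx by_ (node_of s t).
  apply/andP; split => //; case/andP: Hon => Ha _; exact: connect_trans Ha H1.
have Nt : node_of s' t = (true, bx) by rewrite b_node // /fb Hton.
have No : node_of s' o = (true, bx) by rewrite b_node ?Hos // /node_of Hos /fb Hon.
have Ht' : lab s' t != Out by rewrite b_out.
have Ho2 : lab s' o != Out by rewrite Ho'.
have [Et Bt] := b_nodeT Ht' Nt; have [Eo Bo] := b_nodeT Ho2 No.
by rewrite /same_blossom Et Eo Bt Bo !eqxx.
Qed.

End Blossom.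


Section Steps.
Variables (T : finType) (e : rel T) (mate : T -> option T).
Hypothesis mate_sym : forall x y, mate x = Some y -> mate y = Some x.
Hypothesis mate_irr : forall x, mate x != Some x.

Lemma inv_init : Inv mate (init mate).
Proof.
constructor => //=; try by move=> x; rewrite inE.
Qed.

Lemma inv_same s st' (td : {set T}) dn' :
  Inv mate s -> map fv st' = map fv (stk s) -> td \subset todo s -> dn' = dn s ->
  Inv mate (State (lab s) (base s) (par s) st' td (cpf s) dn' (cur s)).
Proof.
case=> Ibase Ipar ImO Iom Ieb Ipo Iop Iu Is Idn Itd IG IH Hst Htd ->.
constructor => //=; rewrite ?Hst //.
by move=> f /(subsetP Htd) /Itd.
Qed.

Lemma inv_return s v sc st : Inv mate s -> stk s = FScan v sc :: st ->
  Inv mate (State (lab s) (base s) (par s) st (todo s) (cpf s) (v |: dn s) (cur s)).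
Proof.
case=> Ibase Ipar ImO Iom Ieb Ipo Iop Iu Is Idn Itd IG IH Hs.
have Hvs : map fv (stk s) = v :: map fv st by rewrite Hs.
rewrite Hvs /= in Iu Is IH; case/andP: Iu => Hv Iu.
have Hv' : lab s v = Even by case: (Is v); rewrite ?inE ?eqxx.
constructor => //=.
- move=> z Hz; case: (Is z); first by rewrite inE Hz orbT.
  move=> -> Hd; split => //; rewrite !inE negb_or Hd andbT.
  by apply/eqP => E; rewrite -E Hz in Hv.
- by move=> x; rewrite !inE => /orP [/eqP ->|/Idn].
- move=> x Hx Hb; rewrite !inE => /orP [/eqP E|Hd] w Hw Hd'.
    subst x; case: (IH [::] v (map fv st) erefl Hb w Hw Hd') => [->|[H|H]] //;
      by rewrite !inE ?eqxx ?H ?orbT.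
  by rewrite inE (IG x Hx Hb Hd w Hw Hd') orbT.
- move=> pre z post Hp Hb w Hw Hd.
  case: (IH (v :: pre) z post _ Hb w Hw Hd); first by rewrite Hp.
    by move=> ->; left.
  case=> H.
    by right; left; rewrite inE H orbT.
  move: H; rewrite inE => /orP [/eqP ->|H]; first by right; left; rewrite !inE eqxx.
  by right; right.
Qed.

End Steps.


Section Steps2.
Variables (T : finType) (e : rel T) (mate : T -> option T).
Hypothesis mate_sym : forall x y, mate x = Some y -> mate y = Some x.
Hypothesis mate_irr : forall x, mate x != Some x.

Lemma neq_out (s : state T) x y : lab s x != Out -> lab s y = Out -> (x == y) = false.
Proof. by move=> Hx Hy; apply/eqP => E; rewrite E Hy in Hx. Qed.

Section Aug.
Variables (s : state T) (v : T) (sc : {set T}) (st : seq (frame T)) (y : T) (cp : {set T}).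
Hypothesis I : Inv mate s.
Hypothesis Hs : stk s = FScan v sc :: st.
Hypothesis Hy : lab s y = Out.
Hypothesis Hfy : free mate y.
Hypothesis Hcp : cpf s \subset cp.
Hypothesis Hycp : y \in cp.
Let s' := State (upd (lab s) y Odd) (base s) (upd (par s) y (Some v)) [::] (todo s) cp (dn s) (cur s).

Lemma aug_v : lab s v = Even.
Proof. by apply: (v_stk I); rewrite Hs inE eqxx. Qed.

Lemma aug_simple : Simple s s'.
Proof. by move=> x Hx; rewrite /= /upd (neq_out Hx Hy). Qed.

Lemma aug_inv : Inv mate s'.
Proof.
have Hv := aug_v.
have Hvy : (v == y) = false by apply: (neq_out _ Hy); rewrite Hv.
have Hnm : forall x, mate x != Some y.
  by move=> x; apply/eqP => /mate_sym; move: Hfy; rewrite /free => /eqP ->.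
case: (I) => Ibase Ipar ImO Iom Ieb Ipo Iop Iu Is Idn Itd IG IH.
constructor => //=; rewrite /upd.
- move=> x; case: eqP => // _ Hx; have [H1 H2] := Ibase x Hx.
  by rewrite (neq_out (x := base s x) _ Hy) ?H1.
- move=> x p; case: eqP => [_ [<-]|_ Hp]; first by rewrite Hvy Hv.
  by case: (Ipar x p Hp) => H1 H2; rewrite ?(neq_out H1 Hy) ?(neq_out H2 Hy).
- move=> x x' Hm; have [E|Hxy] := eqVneq x y; first by subst x; move: Hfy; rewrite /free Hm.
  have -> : (x' == y) = false by apply/eqP => E; move: (Hnm x); rewrite Hm E eqxx.
  exact: ImO.
- move=> x x'; case: eqP => [->|_ Hx Hm]; first by rewrite (eqP Hfy).
  have [H1 H2] := Iom x x' Hx Hm.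
  have Hx'y : (x' == y) = false by apply: (neq_out _ Hy); rewrite H1.
  by rewrite Hx'y.
- move=> x p; case: eqP => // _ /= Hx Hp.
  case: (Ipar x p Hp) => _ H2; rewrite (neq_out H2 Hy); exact: Ieb.
- move=> z p; case: eqP => [_ [<-]|_ /= Hp]; first by rewrite Hvy Hv.
  case: (Ipar z p Hp) => _ H2; rewrite (neq_out H2 Hy); exact: Ipo.
- move=> x p; case: eqP => [_ _ [<-]|_ /= Hx Hp]; first by rewrite Hvy.
  have H := Iop x p Hx Hp; rewrite (neq_out (x := p) _ Hy) ?H //.
- move=> x Hx; have := Idn x Hx; case: eqP => // -> ; by rewrite Hy.
- move=> f Hf; have [H1 H2] := Itd f Hf; split => // Hc; rewrite H2.
    by case: eqP => // E; rewrite E Hycp in Hc.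
  by apply: contra Hc; apply: (subsetP Hcp).
- move=> x; case: eqP => // _ Hx Hb Hd w; case: eqP => // _ Hw Hdw.
  apply: (IG x Hx Hb Hd w Hw).
  have Hw' : lab s w != Out by rewrite Hw.
  move: Hdw; rewrite (simple_node aug_simple Hw').
  by rewrite (simple_desc I aug_simple _ (innode_node I Hw')).
- by move=> pre z post; case: pre.
Qed.

End Aug.
End Steps2.


Section Grow.
Variables (T : finType) (e : rel T) (mate : T -> option T).
Hypothesis mate_sym : forall x y, mate x = Some y -> mate y = Some x.
Hypothesis mate_irr : forall x, mate x != Some x.
Variables (s : state T) (v : T) (sc : {set T}) (st : seq (frame T)) (y y' : T).
Hypothesis I : Inv mate s.
Hypothesis Hs : stk s = FScan v sc :: st.
Hypothesis Hy : lab s y = Out.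
Hypothesis Hmy : mate y = Some y'.
Let s' := State (upd (upd (lab s) y Odd) y' Even) (upd (base s) y' y')
             (upd (upd (par s) y (Some v)) y' (Some y))
             (FCall y' :: FScan v (y |: sc) :: st) (todo s) (cpf s) (dn s) (cur s).

Lemma gr_y' : lab s y' = Out.
Proof. by have := i_mateOut I Hmy; rewrite Hy eqxx => /esym/eqP. Qed.

Lemma gr_yy : (y == y') = false.
Proof. by apply/eqP => E; move: (mate_irr y); rewrite {2}E Hmy eqxx. Qed.

Lemma gr_v : lab s v = Even.
Proof. by apply: (v_stk I); rewrite Hs inE eqxx. Qed.

Lemma gr_simple : Simple s s'.
Proof.
move=> x Hx; rewrite /= /upd (neq_out Hx Hy) (neq_out Hx gr_y'); done.
Qed.

Lemma gr_nodeS x : lab s x != Out -> node_of s' x = node_of s x.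
Proof. exact: (simple_node gr_simple). Qed.

Lemma gr_descS n m : innode s n -> desc s' n m = desc s n m.
Proof. exact: (simple_desc I gr_simple). Qed.

Lemma gr_n1 : node_of s' y' = (true, y').
Proof. by rewrite /node_of /= /upd !eqxx. Qed.

Lemma gr_p1 : pnode s' (true, y') = Some (false, y).
Proof. by rewrite /pnode /= /upd eqxx /node_of /= /upd eqxx eq_sym gr_yy eqxx. Qed.

Lemma gr_p2 : pnode s' (false, y) = Some (node_of s v).
Proof.
rewrite /pnode /= /upd gr_yy eqxx /= gr_nodeS //.
by rewrite (v_stk I) // Hs inE eqxx.
Qed.

Lemma gr_desc_y' a : desc s' (true, y') a -> a != (true, y') -> a != (false, y) ->
  desc s (node_of s v) a.
Proof.
move=> H n1 n2.
have H2 := conn_step (g := pnode s') H (negbT (introF eqP (fun E => (negP n1) (introT eqP (esym E))))) gr_p1.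
have H3 := conn_step (g := pnode s') H2 (negbT (introF eqP (fun E => (negP n2) (introT eqP (esym E))))) gr_p2.
rewrite -gr_descS //; apply: (innode_node I); by rewrite (v_stk I) // Hs inE eqxx.
Qed.

Ltac splitv x nx nx' :=
  let E := fresh "E" in
  case: (eqVneq x y') => [E|nx']; [subst x; rewrite /= /upd eqxx ?gr_yy |];
  [| case: (eqVneq x y) => [E|nx]; [subst x; rewrite /= /upd eqxx ?gr_yy |
       rewrite /= /upd (negbTE nx) (negbTE nx')]].

Lemma gr_inv : Inv mate s'.
Proof.
have Hv := gr_v; have Hy' := gr_y'; have Hyy := gr_yy.
have Hyy2 : (y' == y) = false by rewrite eq_sym.
have Hvy : (v == y) = false by apply: (neq_out _ Hy); rewrite Hv.
have Hvy' : (v == y') = false by apply: (neq_out _ Hy'); rewrite Hv.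
have Hmy' : mate y' = Some y by apply: mate_sym.
have Sneq : forall z, lab s z != Out -> (z == y) = false /\ (z == y') = false.
  by move=> z Hz; rewrite (neq_out Hz Hy) (neq_out Hz Hy').
case: (I) => Ibase Ipar ImO Iom Ieb Ipo Iop Iu Is Idn Itd IG IH.
constructor.
- move=> x; splitv x nx nx'; rewrite ?Hyy2 ?eqxx //.
  move=> Hx; have [H1 H2] := Ibase x Hx.
  have [-> ->] : (base s x == y) = false /\ (base s x == y') = false by apply: Sneq; rewrite H1.
  by rewrite H1 H2.
- move=> x p; splitv x nx nx'.
  + by case=> <-; rewrite Hyy eqxx.
  + by case=> <-; rewrite Hvy' Hvy Hv.
  + move=> Hp; case: (Ipar x p Hp) => H1 H2; case: (Sneq p H2) => -> ->.
    by rewrite H1 H2.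
- move=> x x' Hm; splitv x nx nx'.
  + by move: Hm; rewrite Hmy' => -[<-]; rewrite Hyy eqxx.
  + by move: Hm; rewrite Hmy => -[<-]; rewrite eqxx.
  + have nx'1 : (x' == y) = false.
      by apply/eqP => E; subst x'; move: (mate_sym Hm); rewrite Hmy => -[E]; rewrite E eqxx in nx'.
    have nx'2 : (x' == y') = false.
      by apply/eqP => E; subst x'; move: (mate_sym Hm); rewrite Hmy' => -[E]; rewrite E eqxx in nx.
    rewrite nx'1 nx'2; exact: ImO.
- move=> x x'; splitv x nx nx'.
  + by [].
  + by move=> _; rewrite Hmy => -[<-]; rewrite eqxx.
  + move=> Hx Hm; have [H1 H2] := Iom x x' Hx Hm.
    by case: (Sneq x'); rewrite ?H1 // => -> ->.
- move=> x p; splitv x nx nx'.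
  + by [].
  + by [].
  + move=> Hx Hp; case: (Ipar x p Hp) => _ H2; case: (Sneq p H2) => -> ->.
    exact: Ieb.
- move=> z p; splitv z nz nz'.
  + by case=> <-; rewrite Hyy eqxx.
  + by case=> <-; rewrite Hvy' Hvy Hv.
  + move=> Hp; case: (Ipar z p Hp) => _ H2; case: (Sneq p H2) => -> ->.
    exact: Ipo.
- move=> x p; splitv x nx nx'.
  + by [].
  + by move=> _ [<-]; rewrite Hvy' Hvy Hv.
  + move=> Hx Hp; case: (Ipar x p Hp) => _ H2; case: (Sneq p H2) => -> ->.
    exact: Iop Hx Hp.
- rewrite /s' /=; rewrite Hs /= in Iu Is; rewrite Iu andbT.
  by apply/negP => Hin; have := Is y' Hin; rewrite Hy'; case.
- move=> z; rewrite /s' /= inE => /orP [/eqP ->|Hz].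
    rewrite /upd eqxx; split => //; apply/negP => /Idn; by rewrite Hy'.
  have [H1 H2] : lab s z = Even /\ z \notin dn s by apply: Is; rewrite Hs.
  by case: (Sneq z); rewrite ?H1 // /upd => -> ->.
- rewrite /s' /= => x Hx; have H := Idn x Hx; case: (Sneq x); rewrite ?H // /upd => -> ->.
  done.
- rewrite /s' /= => f Hf; have [H1 H2] := Itd f Hf; split => // Hc.
  rewrite /upd; have [-> ->] : (f == y) = false /\ (f == y') = false.
    by move: H1; rewrite /free => /eqP Hf0; split; apply/eqP => E; subst f;
       [rewrite Hmy in Hf0 | rewrite Hmy' in Hf0].
  exact: H2.
- move=> x _ Hb Hd w Hw Hdw.
  have Hx : lab s x = Even by apply: Idn.
  have [nx nx'] : (x == y) = false /\ (x == y') = false by apply: Sneq; rewrite Hx.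
  move: Hb; rewrite /s' /= /upd nx' => Hb.
  have [E|nw'] := eqVneq w y'.
    subst w; rewrite gr_n1 in Hdw.
    have Hdv : desc s (node_of s v) (true, x).
      apply: (@gr_desc_y' (true, x) Hdw) => //; by apply/eqP => -[E]; rewrite E eqxx in nx'.
    have := IG x Hx Hb Hd v Hv Hdv.
    by have := Is v; rewrite Hs inE eqxx => /(_ isT) [_ /negbTE ->].
  have [E|nw] := eqVneq w y.
    by subst w; move: Hw; rewrite /s' /= /upd eqxx gr_yy.
  have Hw' : lab s w = Even by move: Hw; rewrite /s' /= /upd (negbTE nw) (negbTE nw').
  apply: (IG x Hx Hb Hd w Hw').
  have Hw2 : lab s w != Out by rewrite Hw'.
  by move: Hdw; rewrite gr_nodeS // gr_descS // (innode_node I).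
- move=> pre z post Hp Hb w Hw Hdw.
  have Hvs : map fv (stk s') = y' :: map fv (stk s) by rewrite /s' /= Hs.
  rewrite Hvs in Hp.
  have [E|nw'] := eqVneq w y'.
    subst w; case: pre Hp => [|a pre'] /= [-> Hp]; first by left.
    by right; right; rewrite inE eqxx.
  have [E|nw] := eqVneq w y.
    by subst w; move: Hw; rewrite /s' /= /upd eqxx gr_yy.
  have Hw' : lab s w = Even by move: Hw; rewrite /s' /= /upd (negbTE nw) (negbTE nw').
  have Hw2 : lab s w != Out by rewrite Hw'.
  move: Hdw; rewrite gr_nodeS // gr_descS ?(innode_node I) // => Hdw.
  case: pre Hp => [|a pre'] /= [Ea Hp].
    subst z; have := desc_P I (innode_node I Hw2) Hdw.
    by rewrite /innode /= Hy'.
  subst a.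
  have Hz : lab s z = Even by apply: (v_stk I); rewrite Hp mem_cat inE eqxx orbT.
  have [nz nz'] : (z == y) = false /\ (z == y') = false by apply: Sneq; rewrite Hz.
  move: Hb; rewrite /s' /= /upd nz' => Hb.
  case: (IH pre' z post Hp Hb w Hw' Hdw) => [->|[H|H]]; first by left.
    by right; left.
  by right; right; rewrite inE H orbT.
Qed.
End Grow.


Section Root.
Variables (T : finType) (e : rel T) (mate : T -> option T).
Hypothesis mate_sym : forall x y, mate x = Some y -> mate y = Some x.
Variables (s : state T) (f : T).
Hypothesis I : Inv mate s.
Hypothesis Hf : f \in todo s.
Hypothesis Hfc : f \notin cpf s.
Let s' := State (upd (lab s) f Even) (upd (base s) f f) (upd (par s) f None)
             [:: FCall f] (todo s :\ f) (cpf s) (dn s) (Some f).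

Lemma rt_out : lab s f = Out.
Proof. exact: ((i_todo I Hf).2 Hfc). Qed.

Lemma rt_free : mate f = None.
Proof. by apply/eqP; exact: (i_todo I Hf).1. Qed.

Lemma rt_simple : Simple s s'.
Proof. by move=> x Hx; rewrite /= /upd (neq_out Hx rt_out). Qed.

Lemma rt_inv : Inv mate s'.
Proof.
have Hfo := rt_out; have Hfr := rt_free.
have Sn : forall z, lab s z != Out -> (z == f) = false by move=> z Hz; apply: neq_out Hz Hfo.
case: (I) => Ibase Ipar ImO Iom Ieb Ipo Iop Iu Is Idn Itd IG IH.
constructor; rewrite /s' /= /upd.
- move=> x; case: eqP => [E|nx]; first by subst x; rewrite !eqxx.
  move=> Hx; have [H1 H2] := Ibase x Hx.
  have nb : (base s x == f) = false by apply: Sn; rewrite H1.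
  by rewrite nb H1 H2.
- move=> x p; case: eqP => // nx Hp; case: (Ipar x p Hp) => H1 H2.
  by rewrite ?(Sn _ H1) ?(Sn _ H2) /= H1 H2.
- move=> x x' Hm; have [E|nx] := eqVneq x f; first by subst x; rewrite Hfr in Hm.
  have [E|nx'] := eqVneq x' f; first by subst x'; rewrite (mate_sym Hm) in Hfr.
  rewrite ?(negbTE nx) ?(negbTE nx') /=; exact: ImO.
- move=> x x'; case: eqP => // nx Hx Hm; have [H1 H2] := Iom x x' Hx Hm.
  have nb : (x' == f) = false by apply: Sn; rewrite H1.
  by rewrite nb H1 H2.
- move=> x p; case: eqP => // nx Hx Hp; case: (Ipar x p Hp) => _ H2.
  rewrite ?(Sn _ H2) /=; exact: Ieb.
- move=> z p; case: eqP => // nz Hp; case: (Ipar z p Hp) => _ H2.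
  rewrite ?(Sn _ H2) /=; exact: Ipo.
- move=> x p; case: eqP => // nx Hx Hp; case: (Ipar x p Hp) => _ H2.
  rewrite ?(Sn _ H2) /=; exact: Iop Hx Hp.
- by [].
- move=> z; rewrite inE => /eqP E; subst z; rewrite eqxx; split => //.
  by apply/negP => /Idn; rewrite Hfo.
- move=> x Hx; have H := Idn x Hx.
  have nb : (x == f) = false by apply: Sn; rewrite H.
  by rewrite nb.
- move=> g; rewrite !inE => /andP [ng Hg]; have [H1 H2] := Itd g Hg; split => // Hc.
  by rewrite (negbTE ng); apply: H2.
- move=> x _ Hb Hd w; have Hx := Idn x Hd.
  have nb : (x == f) = false by apply: Sn; rewrite Hx.
  rewrite nb in Hb.
  case: eqP => [E _|nw Hw Hdw].
    subst w; rewrite /node_of /= /upd !eqxx /= => Hdw.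
    have := conn_none (g := pnode s') Hdw; rewrite /pnode /= /upd eqxx => /(_ erefl) [E].
    by subst x; rewrite Hfo in Hx.
  have Hw' : lab s w = Even by [].
  have Hw2 : lab s w != Out by rewrite Hw'.
  apply: (IG x Hx Hb Hd w Hw').
  by move: Hdw; rewrite (simple_node rt_simple) // (simple_desc I rt_simple) // (innode_node I).
- move=> pre z post Hp Hb w; case: pre Hp => [|a pre'] /= [Ez Hp]; last by case: pre' Hp.
  subst z; case: eqP => [E _ _|nw Hw Hdw]; first by left.
  have Hw2 : lab s w != Out by rewrite Hw.
  move: Hdw; rewrite (simple_node rt_simple) // (simple_desc I rt_simple) ?(innode_node I) //.
  by move=> /(desc_P I (innode_node I Hw2)); rewrite /innode /= Hfo.
Qed.
End Root.


Section Final.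
Variables (T : finType) (e : rel T) (mate : T -> option T).
Hypothesis mate_sym : forall x y, mate x = Some y -> mate y = Some x.
Hypothesis mate_irr : forall x, mate x != Some x.

Lemma inv_step k s s' : Inv mate s -> step e mate k s s' -> Inv mate s'.
Proof.
move=> I H; case: H I => {k s s'}.
- move=> s0 f Hs _ _ I; apply: inv_same => //; last exact: subsetDl.
  by rewrite Hs.
- move=> s0 f Hs Hf Hfc I; exact: rt_inv.
- move=> s0 v st Hs I; apply: inv_same => //; by rewrite ?Hs ?subxx.
- move=> s0 v sc st Hs _ I; exact: (inv_return I Hs).
- move=> s0 v sc st y Hs _ _ Hy Hfy I; apply: aug_inv => //.
  + exact: Hs.
  + by apply/subsetP => z Hz; case: (cur s0) => [r|] /=; rewrite !inE Hz !orbT.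
  + by rewrite !inE eqxx.
- move=> s0 v sc st y y' Hs _ _ Hy Hm I; exact: gr_inv.
- move=> s0 v sc st y us Hs _ _ Hy Hpd Hperm _ I; exact: b_inv.
- move=> s0 v sc st y Hs _ _ _ _ I; apply: inv_same => //; by rewrite ?Hs ?subxx.
Qed.

Lemma steps_inv s s' : steps e mate s s' -> Inv mate s -> Inv mate s'.
Proof. elim=> // s1 k s2 s3 Hst _ IH I; apply: IH; exact: inv_step Hst. Qed.

Definition Qall (s : state T) o t :=
  [/\ Inv mate s, lab s o != Out, lab s t != Out & Qp s o t].

Lemma simple_all s s' o t : Simple s s' ->
  (forall w, lab s w = Out -> lab s' w = Even -> base s' w = w) ->
  dn s \subset dn s' -> Inv mate s' -> Qall s o t -> Qall s' o t.
Proof.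
move=> S Hn Hd I' [I Ho Ht HQ]; split => //.
- by rewrite (S o Ho).1.
- by rewrite (S t Ht).1.
exact: (simple_Q I S Hn Hd Ho Ht HQ).
Qed.

Lemma step_Q k s s' o t : step e mate k s s' -> Qall s o t -> Qall s' o t.
Proof.
move=> H HQ; have I0 : Inv mate s by case: HQ.
have I' := inv_step I0 H; clear I0.
move: HQ I'; case: H => {k s s'}.
- move=> s0 f Hs _ _ HQ I'; apply: simple_all HQ => //.
  by move=> w ->.
- move=> s0 f Hs Hf Hfc HQ I'; case: (HQ) => I _ _ _; apply: simple_all HQ => //.
  + exact: (rt_simple I Hf Hfc).
  + move=> w Hw; rewrite /= /upd; case: eqP => // ne; by rewrite Hw.
- move=> s0 v st Hs HQ I'; apply: simple_all HQ => //; by move=> w ->.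
- move=> s0 v sc st Hs _ HQ I'; apply: simple_all HQ => //; first by move=> w ->.
  exact: subsetUr.
- move=> s0 v sc st y Hs _ _ Hy Hfy HQ I'; apply: simple_all HQ => //.
  + exact: aug_simple.
  + move=> w Hw; rewrite /= /upd; case: eqP => // ne; by rewrite Hw.
- move=> s0 v sc st y y' Hs _ _ Hy Hm HQ I'; case: (HQ) => I _ _ _; apply: simple_all HQ => //.
  + exact: (gr_simple v sc st I Hy Hm).
  + move=> w Hw; rewrite /= /upd; case: eqP => // ne; case: eqP => // ne2; by rewrite Hw.
- move=> s0 v sc st y us Hs _ _ Hy Hpd Hperm _ [I Ho Ht HQ] I'; split => //.
  + by rewrite b_out.
  + by rewrite b_out.
  exact: (b_Q I Hs Hpd Hperm Ho Ht HQ).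
- move=> s0 v sc st y Hs _ _ _ _ HQ I'; apply: simple_all HQ => //; by move=> w ->.
Qed.

Lemma steps_Q s s' o t : steps e mate s s' -> Qall s o t -> Qall s' o t.
Proof. elim=> // s1 k s2 s3 Hst _ IH HQ; apply: IH; exact: step_Q Hst HQ. Qed.

Lemma Q_init s t t' o : Inv mate s -> lab s t = Odd -> mate t = Some t' ->
  lab s t' = Even -> t' \in dn s -> desc s (false, o) (false, t) -> Qp s o t.
Proof.
move=> I Ht Hm Ht' Hd Hot _.
have Nt : node_of s t = (false, t) by rewrite /node_of Ht.
rewrite Nt; split => // m Hm1 Hnm w Hw Hwm.
have Hmt : desc s m (false, t).
  by case: (conn_cmp (g := pnode s) Hot Hm1) => // H; move/negP: Hnm; case.
have Hne : m != (false, t).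
  by apply/eqP => E; move/negP: Hnm; apply; rewrite E; exact: connect0.
have [c [Hc Hgc]] := conn_last Hmt Hne.
have Wm : wellnode s m by rewrite -Hwm; apply: (wellnode_node I); rewrite Hw.
have Wc := desc_W I Wm Hc.
move: Hgc; rewrite /pnode; case E: (par s c.2) => [p|] //= [Ep].
have Hpt : p = t.
  by move: Ep; rewrite /node_of; case: ifP => // _ [->].
subst p.
have Hc2 := i_parodd I E Ht; rewrite Hm in Hc2; case: Hc2 => Hc2.
have [_ Hpar] := i_oddmate I Ht Hm.
have Hb := i_evbase I Ht' Hpar Ht.
case: c Hc Wc E Hc2 => [b z] /= Hc Wc E Hz; subst z.
case: b Hc Wc => Hc Wc; last by move: Wc; rewrite /wellnode /= Ht'.
apply: (@i_G0 _ _ _ I t' Ht' Hb Hd w Hw); rewrite Hwm; exact: Hc.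
Qed.

End Final.


Unset Implicit Arguments.
Theorem lemmaA3 (T : finType) (e : rel T) (mate : T -> option T)
  (e_sym : symmetric e) (e_irr : irreflexive e)
  (mate_sym : forall x y, mate x = Some y -> mate y = Some x)
  (mate_edge : forall x y, mate x = Some y -> e x y)
  (s1 s2 s3 : state T) (t t' s : T) :
  reachable e mate s1 ->
  lab s1 t = Odd -> mate t = Some t' -> lab s1 t' = Even -> t' \in dn s1 ->
  lab s1 s = Odd -> desc s1 (false, s) (false, t) ->
  steps e mate s1 s2 -> step e mate KBlossom s2 s3 ->
  lab s2 s = Odd -> lab s3 s = Even ->
  same_blossom s3 s t.
Proof.
move=> Hr Ht Hm Ht' Hd Ho Hot H12 H23 Ho2 Ho3.
have mate_irr : forall x, mate x != Some x.
  by move=> x; apply/eqP => /mate_edge; rewrite e_irr.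
have I1 : Inv mate s1 := steps_inv mate_sym mate_irr Hr (inv_init mate).
have Q1 : Qall mate s1 s t.
  split => //; [by rewrite Ho | by rewrite Ht | exact: (Q_init I1 Ht Hm Ht' Hd Hot)].
have [I2 _ Ht2 Q2] := steps_Q mate_sym mate_irr H12 Q1.
move: H23; move E: KBlossom => k H; case: H E I2 Q2 Ht2 Ho2 Ho3 => // {k}.
move=> s0 v sc st y us Hs _ _ Hy Hpd Hperm _ _ I2 Q2 Ht2 Ho2 Ho3.
exact: (b_final I2 Hs Ho2 Ht2 Q2 Ho3).
Qed.
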